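(* Let $\rho$ be a set function on subsets of $\{1,\ldots,r\}$ that is subadditive, monotone increasing, and satisfies $\rho(I)=0$ iff $I=\emptyset$, and let $\lambda_\rho=\min\{\lceil\max_S\rho(S)/\min_{S\neq\emptyset}\rho(S)\rceil,\ r\}$. For any collection $\mathcal A$ of nonempty subsets of $\{1,\ldots,r\}$, there exists a subcollection $\widehat{\mathcal A}\subseteq\mathcal A$ of size at most $\lambda_\rho$ such that $\rho\big(\bigcup_{A\in\mathcal A}A\big)\le\sum_{A\in\widehat{\mathcal A}}\rho(A)$.
   Context: Subadditive means $\rho(A\cup B)\le\rho(A)+\rho(B)$ for all sets $A,B$. *)

(* Defs.v *)
From HB Require Import structures.
From mathcomp Require Import all_boot all_order all_algebra.
Set Implicit Arguments. Unset Strict Implicit. Unset Printing Implicit Defensive.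
Import Order.TTheory GRing.Theory Num.Theory.
Local Open Scope ring_scope.

Section SetFun.
Variables (R : archiRealFieldType) (r : nat) (rho : {set 'I_r} -> R).

Definition subadditive := forall A B : {set 'I_r}, rho (A :|: B) <= rho A + rho B.
Definition monotone_incr := forall A B : {set 'I_r}, A \subset B -> rho A <= rho B.
Definition zero_iff_empty := forall I : {set 'I_r}, rho I = 0 <-> I = set0.

Definition rho_max : R := \big[Num.max/0]_(S : {set 'I_r}) rho S.
(* min_{S <> emptyset} rho(S)  (the seed rho_max is >= every value, so this
   is the true minimum whenever a nonempty S exists, i.e. r > 0) *)
Definition rho_min : R := \big[Num.min/rho_max]_(S : {set 'I_r} | S != set0) rho S.

Definition lambda_rho : nat := minn `|Num.ceil (rho_max / rho_min)|%N r.
End SetFun.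

(* Main.v *)
Require Import Defs.
From HB Require Import structures.
From mathcomp Require Import all_boot all_order all_algebra.
Import Order.TTheory GRing.Theory Num.Theory.
Set Implicit Arguments. Unset Strict Implicit.
Local Open Scope ring_scope.

Section Aux.
Variables (R : archiRealFieldType) (r : nat) (rho : {set 'I_r} -> R).
Hypotheses (Hsub : subadditive rho) (Hmono : monotone_incr rho)
  (Hzero : zero_iff_empty rho).

Lemma rho0 : rho set0 = 0.
Proof. by apply/Hzero. Qed.

Lemma rho_ge0 S : 0 <= rho S.
Proof. by rewrite -rho0; apply: Hmono; rewrite sub0set. Qed.

Lemma rho_gt0 S : S != set0 -> 0 < rho S.
Proof.
move=> HS; rewrite lt_def rho_ge0 andbT; apply/eqP => /Hzero E.
by rewrite E eqxx in HS.
Qed.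

Lemma subadd_big (B : {set {set 'I_r}}) :
  rho (\bigcup_(A in B) A) <= \sum_(A in B) rho A.
Proof.
apply: (big_ind2 (fun U s => rho U <= s)).
- by rewrite rho0.
- move=> U1 s1 U2 s2 h1 h2; apply: le_trans (Hsub _ _) _; exact: lerD.
- by move=> A _.
Qed.

Lemma le_rho_max S : rho S <= rho_max rho.
Proof.
rewrite /rho_max (bigD1 S) //=; by rewrite le_max lexx.
Qed.

Lemma rho_min_le S : S != set0 -> rho_min rho <= rho S.
Proof.
move=> HS; rewrite /rho_min (bigD1 S) //=; by rewrite ge_min lexx.
Qed.

Lemma rho_min_gt0 : (0 < r)%N -> 0 < rho_min rho.
Proof.
move=> r0.
have HT : [set: 'I_r] != set0.
  by apply/set0Pn; exists (Ordinal r0).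
rewrite /rho_min; apply: (big_ind (fun x => 0 < x)).
- exact: (lt_le_trans (rho_gt0 HT) (le_rho_max _)).
- by move=> x y hx hy; rewrite lt_min hx hy.
- by move=> S HS; exact: rho_gt0.
Qed.
End Aux.

Theorem proposition6p6 (R : archiRealFieldType) (r : nat) (rho : {set 'I_r} -> R)
    (Hsub : subadditive rho) (Hmono : monotone_incr rho) (Hzero : zero_iff_empty rho)
    (calA : {set {set 'I_r}}) (HA : forall A, A \in calA -> A != set0) :
  exists hatA : {set {set 'I_r}},
    [/\ hatA \subset calA, (#|hatA| <= lambda_rho rho)%N &
        rho (\bigcup_(A in calA) A) <= \sum_(A in hatA) rho A].
Proof.
set U := \bigcup_(A in calA) A.
set k := `|Num.ceil (rho_max rho / rho_min rho)|%N.
have Hr : exists hatA : {set {set 'I_r}},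
    [/\ hatA \subset calA, (#|hatA| <= r)%N & rho U <= \sum_(A in hatA) rho A].
  pose f i := odflt set0 [pick A in calA | i \in A].
  exists (f @: U); split.
  - apply/subsetP => A /imsetP [i /bigcupP [B HB iB] ->].
    rewrite /f; case: pickP => [C /andP [] //|/(_ B)].
    by rewrite HB iB.
  - apply: leq_trans (leq_imset_card _ _) _.
    by apply: leq_trans (max_card _) _; rewrite card_ord.
  - apply: le_trans (subadd_big Hsub Hzero _).
    apply: Hmono; apply/subsetP => i iU.
    have [B HB iB] := bigcupP iU.
    apply/bigcupP; exists (f i); first by apply/imsetP; exists i.
    rewrite /f; case: pickP => [C /andP [] //|/(_ B)].
    by rewrite HB iB.
have Hk : exists hatA : {set {set 'I_r}},
    [/\ hatA \subset calA, (#|hatA| <= k)%N & rho U <= \sum_(A in hatA) rho A].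
  case: (leqP #|calA| k) => hc.
    by exists calA; split => //; exact: subadd_big.
  have r0 : (0 < r)%N.
    have [A HA1] : exists A, A \in calA.
      by apply/set0Pn; rewrite -cards_eq0 -lt0n; exact: leq_ltn_trans hc.
    have [i _] := set0Pn _ (HA _ HA1).
    exact: leq_ltn_trans (leq0n i) (ltn_ord i).
  pose B := [set A in take k (enum calA)].
  have cB : #|B| = k.
    have u : uniq (take k (enum calA)) by rewrite take_uniq ?enum_uniq.
    rewrite cardsE (card_uniqP u) size_take -cardE.
    by rewrite hc.
  exists B; split.
  - apply/subsetP => A; rewrite inE => /mem_take.
    by rewrite mem_enum.
  - by rewrite cB.
  have Bsub : forall A, A \in B -> A \in calA.
    by move=> A; rewrite inE => /mem_take; rewrite mem_enum.
  apply: le_trans (le_rho_max _ U) _.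
  apply: le_trans (_ : rho_min rho *+ k <= _).
    have m0 := rho_min_gt0 Hmono Hzero r0.
    have Mm : 0 <= rho_max rho / rho_min rho.
      apply: divr_ge0; [exact: (le_trans (rho_ge0 Hmono Hzero set0) (le_rho_max _ _)) | exact: ltW].
    rewrite -mulr_natr /k natr_absz ger0_norm; last first.
      by rewrite ceil_ge0 (lt_le_trans _ Mm) // ltrN10.
    rewrite mulrC -ler_pdivrMr //; exact: ceil_ge.
  rewrite -cB -sumr_const; apply: ler_sum => A HA1.
  apply: rho_min_le => //; exact: HA (Bsub _ HA1).
have [h1 [s1 c1 e1]] := Hr.
have [h2 [s2 c2 e2]] := Hk.
rewrite /lambda_rho -/k.
case: (leqP k r) => hkr.
  by exists h2; split => //; rewrite (minn_idPl hkr).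
by exists h1; split => //; rewrite (minn_idPr (ltnW hkr)).
Qed.
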